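(* Let $h(z)=\sum_{k\ge1}h_kz^k$ be a power series with non-negative coefficients, not identically zero. Let $\mathbf{w}=(\omega_k)_{k\ge0}$ be the coefficients of $\phi(z)=1/(1-h(z))$ (as a formal power series), and let $p(z)=zh(z)=\sum_{k\ge2}p_kz^k$. Then $\mathbf{w}$ has type I, II or III (in the sense of weight sequences) if and only if $(p_k)_{k}$ has type I, II or III respectively (in the sense for $(p_k)$), and moreover $\tau=t_0$.
   Context: Types of a weight sequence $\mathbf{w}$ (with $\omega_0>0$ and $\omega_k>0$ for some $k\ge2$, which holds here): let $\rho_\phi$ be the radius of convergence of $\phi(z)=\sum_k\omega_kz^k$; if $\rho_\phi>0$ put $\psi(t)=t\phi'(t)/\phi(t)$ on $[0,\rho_\phi)$ and $\nu=\lim_{t\uparrow\rho_\phi}\psi(t)\in(0,\infty]$; if $\rho_\phi=0$ put $\nu=0$. If $\nu\ge1$, $\tau\in(0,\rho_\phi]$ is the unique number with $\psi(\tau)=1$, otherwise $\tau=\rho_\phi$. Type I: $\nu\ge1$; type II: $0<\nu<1$; type III: $\nu=0$. Types of $(p_k)$: let $\rho_p$ be the radius of convergence of $p(z)$, $\mu_t=p'(t)$ for $t\in[0,\rho_p)$ and $\mu_{\rho_p}=\lim_{t\uparrow\rho_p}\mu_t$. Type I: $\rho_p>0$ and $\mu_{\rho_p}\ge1$, with $t_0$ the unique $t$ satisfying $\mu_t=1$; type II: $\rho_p>0$ and $0<\mu_{\rho_p}<1$, with $t_0=\rho_p$; type III: $\rho_p=0$, with $t_0=0$. *)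

(* Defs.v *)
From Stdlib Require Import Reals Lra ClassicalEpsilon.
Open Scope R_scope.

Inductive ER : Type := Fin (x : R) | Inf.

Definition ER_le (a b : ER) : Prop :=
  match a, b with
  | Fin x, Fin y => x <= y
  | _, Inf => True
  | Inf, Fin _ => False
  end.

Definition ER_lt (a b : ER) : Prop :=
  match a, b with
  | Fin x, Fin y => x < y
  | Fin _, Inf => True
  | Inf, _ => False
  end.

Definition ps_bounded (a : nat -> R) (r : R) : Prop :=
  exists M, forall k, Rabs (a k) * r ^ k <= M.

Definition is_radius (a : nat -> R) (rho : ER) : Prop :=
  (forall r, 0 <= r -> ps_bounded a r -> ER_le (Fin r) rho) /\
  (forall b : ER, (forall r, 0 <= r -> ps_bounded a r -> ER_le (Fin r) b) ->
      ER_le rho b).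

(** Sum of a real series (0 if divergent). *)
Definition series_sum (u : nat -> R) : R :=
  match excluded_middle_informative
          (exists l, Un_cv (fun n => sum_f_R0 u n) l) with
  | left H => proj1_sig (constructive_indefinite_description _ H)
  | right _ => 0
  end.

Definition ps_eval (a : nat -> R) (t : R) : R :=
  series_sum (fun k => a k * t ^ k).

(** Derivative of f at x (0 if f is not differentiable at x). *)
Definition deriv (f : R -> R) (x : R) : R :=
  match excluded_middle_informative (exists l, derivable_pt_lim f x l) with
  | left H => proj1_sig (constructive_indefinite_description _ H)
  | right _ => 0
  end.

Definition near_left (rho : ER) (P : R -> Prop) : Prop :=
  match rho with
  | Fin r => exists d, 0 < d /\ forall t, 0 <= t -> r - d < t -> t < r -> P t
  | Inf => exists M, forall t, M < t -> P t
  end.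

Definition tends_left (f : R -> R) (rho : ER) (L : ER) : Prop :=
  match L with
  | Fin l => forall eps, 0 < eps -> near_left rho (fun t => Rabs (f t - l) < eps)
  | Inf => forall M, near_left rho (fun t => M < f t)
  end.

Inductive seqtype : Type := TypeI | TypeII | TypeIII.

Definition psi (w : nat -> R) (t : R) : R :=
  t * deriv (ps_eval w) t / ps_eval w t.

Definition weight_type (w : nat -> R) (T : seqtype) : Prop :=
  match T with
  | TypeI => exists rho nu, is_radius w rho /\ ER_lt (Fin 0) rho /\
               tends_left (psi w) rho nu /\ ER_le (Fin 1) nu
  | TypeII => exists rho nu, is_radius w rho /\ ER_lt (Fin 0) rho /\
               tends_left (psi w) rho nu /\ ER_lt (Fin 0) nu /\ ER_lt nu (Fin 1)
  | TypeIII => is_radius w (Fin 0)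
  end.

(** tau for the weight sequence w (psi extended at rho by its limit nu). *)
Definition tau_spec (w : nat -> R) (tau : ER) : Prop :=
  exists rho, is_radius w rho /\
   ((rho = Fin 0 /\ tau = Fin 0) \/
    (ER_lt (Fin 0) rho /\ exists nu, tends_left (psi w) rho nu /\
      ((ER_le (Fin 1) nu /\ ER_lt (Fin 0) tau /\
          ((exists t, tau = Fin t /\ ER_lt (Fin t) rho /\ psi w t = 1) \/
           (tau = rho /\ nu = Fin 1))) \/
       (ER_lt nu (Fin 1) /\ tau = rho)))).

Definition mu (p : nat -> R) (t : R) : R := deriv (ps_eval p) t.

Definition offspring_type (p : nat -> R) (T : seqtype) : Prop :=
  match T with
  | TypeI => exists rho m, is_radius p rho /\ ER_lt (Fin 0) rho /\
               tends_left (mu p) rho m /\ ER_le (Fin 1) m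
  | TypeII => exists rho m, is_radius p rho /\ ER_lt (Fin 0) rho /\
               tends_left (mu p) rho m /\ ER_lt (Fin 0) m /\ ER_lt m (Fin 1)
  | TypeIII => is_radius p (Fin 0)
  end.

(** t_0 for (p_k) (mu extended at rho_p by its limit). *)
Definition t0_spec (p : nat -> R) (t0 : ER) : Prop :=
  exists rho, is_radius p rho /\
   ((rho = Fin 0 /\ t0 = Fin 0) \/
    (ER_lt (Fin 0) rho /\ exists m, tends_left (mu p) rho m /\
      ((ER_le (Fin 1) m /\
          ((exists t, t0 = Fin t /\ 0 <= t /\ ER_lt (Fin t) rho /\ mu p t = 1) \/
           (t0 = rho /\ m = Fin 1))) \/
       (ER_lt (Fin 0) m /\ ER_lt m (Fin 1) /\ t0 = rho)))).

Definition kdelta (k : nat) : R := match k with O => 1 | S _ => 0 end.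

(** w is the coefficient sequence of 1/(1 - h) as a formal power series:
    (1 - h) * (sum_k w_k z^k) = 1 coefficientwise. *)
Definition is_inv_one_minus (h w : nat -> R) : Prop :=
  forall n, sum_f_R0 (fun k => (kdelta k - h k) * w (n - k)%nat) n = kdelta n.

(** coefficients of p(z) = z h(z). *)
Definition shift_coef (h : nat -> R) (k : nat) : R :=
  match k with O => 0 | S j => h j end.

(* Main.v *)
Require Import Defs.
From Stdlib Require Import Reals Lra Lia ClassicalEpsilon Classical.
From Coquelicot Require Import Coquelicot.
Open Scope R_scope.

Lemma series_sum_is (u : nat -> R) l : is_series u l -> series_sum u = l.
Proof.
  intros H. apply is_series_Reals in H.
  unfold series_sum. destruct excluded_middle_informative as [e|n].
  - destruct constructive_indefinite_description as [l' Hl']. simpl.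
    eapply UL_sequence; eauto.
  - exfalso; apply n; exists l; exact H.
Qed.

Lemma deriv_is f x l : derivable_pt_lim f x l -> deriv f x = l.
Proof.
  intros H. unfold deriv. destruct excluded_middle_informative as [e|n].
  - destruct constructive_indefinite_description as [l' Hl']; simpl.
    eapply uniqueness_limite; eauto.
  - exfalso; apply n; eauto.
Qed.

Lemma ex_series_inside a x : Rbar_lt (Rabs x) (CV_radius a) ->
  ex_series (fun k => a k * x ^ k).
Proof. intros H. apply ex_series_Rabs. now apply CV_disk_inside. Qed.

Lemma ps_eval_PS a x : Rbar_lt (Rabs x) (CV_radius a) -> ps_eval a x = PSeries a x.
Proof.
  intros H. unfold ps_eval, PSeries. apply series_sum_is.
  apply Series_correct. now apply ex_series_inside.
Qed.

Definition toER (x : Rbar) : ER :=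
  match x with Finite r => Fin r | p_infty => Inf | m_infty => Fin 0 end.

Lemma ps_bounded_0 a : ps_bounded a 0.
Proof.
  exists (Rabs (a 0%nat)). intros [|k]; simpl.
  - lra.
  - rewrite Rmult_0_l, Rmult_0_r. apply Rabs_pos.
Qed.

Lemma radius_CV a : is_radius a (toER (CV_radius a)).
Proof.
  destruct (CV_radius_bounded a) as [ub lst].
  assert (HE : forall r, 0 <= r -> ps_bounded a r ->
     (exists M, forall n, Rabs (a n * r ^ n) <= M)).
  { intros r Hr [M HM]. exists M. intros n. rewrite Rabs_mult.
    rewrite (Rabs_pos_eq (r ^ n)) by (apply pow_le; lra). apply HM. }
  assert (HE' : forall r, 0 <= r -> (exists M, forall n, Rabs (a n * r ^ n) <= M) ->
     ps_bounded a r).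
  { intros r Hr [M HM]. exists M. intros n. specialize (HM n). rewrite Rabs_mult in HM.
    rewrite (Rabs_pos_eq (r ^ n)) in HM by (apply pow_le; lra). exact HM. }
  split.
  - intros r Hr Hbd. specialize (ub r (HE r Hr Hbd)).
    destruct (CV_radius a) as [c| |]; simpl in *; tauto.
  - intros b Hb0. destruct b as [y|]; [|destruct (CV_radius a); simpl; auto].
    assert (Hy : 0 <= y) by (apply (Hb0 0); [lra| apply ps_bounded_0]).
    assert (Hl : Rbar_le (CV_radius a) (Finite y)).
    { apply lst. intros r Hr. destruct (Rle_or_lt 0 r) as [H0|H0].
      - apply (Hb0 r H0 (HE' r H0 Hr)).
      - simpl; lra. }
    destruct (CV_radius a); simpl in *; tauto.
Qed.

Lemma ER_le_antisym a b : ER_le a b -> ER_le b a -> a = b.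
Proof. destruct a, b; simpl; intros; try tauto. f_equal; lra. Qed.

Lemma radius_unique a r1 r2 : is_radius a r1 -> is_radius a r2 -> r1 = r2.
Proof.
  intros [H1 H1'] [H2 H2']. apply ER_le_antisym; [apply H1' | apply H2']; auto.
Qed.

Lemma radius_eq a r : is_radius a r -> r = toER (CV_radius a).
Proof. intros H; eapply radius_unique; eauto; apply radius_CV. Qed.

Lemma NL_and rho P Q : near_left rho P -> near_left rho Q ->
  near_left rho (fun t => P t /\ Q t).
Proof.
  destruct rho as [r|]; simpl.
  - intros [d1 [Hd1 H1]] [d2 [Hd2 H2]]. exists (Rmin d1 d2). split.
    + now apply Rmin_glb_lt.
    + intros t Ht1 Ht2 Ht3. split; [apply H1|apply H2]; auto.
      * pose proof (Rmin_l d1 d2); lra.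
      * pose proof (Rmin_r d1 d2); lra.
  - intros [M1 H1] [M2 H2]. exists (Rmax M1 M2). intros t Ht. split.
    + apply H1. pose proof (Rmax_l M1 M2); lra.
    + apply H2. pose proof (Rmax_r M1 M2); lra.
Qed.

Lemma NL_mono rho (P Q : R -> Prop) : (forall t, P t -> Q t) -> near_left rho P -> near_left rho Q.
Proof.
  destruct rho as [r|]; simpl.
  - intros HPQ [d [Hd H]]. exists d. split; auto.
  - intros HPQ [M H]. exists M. auto.
Qed.

Lemma NL_pos rho : ER_lt (Fin 0) rho ->
  near_left rho (fun t => 0 < t /\ ER_lt (Fin t) rho).
Proof.
  destruct rho as [r|]; simpl; intros Hr.
  - exists r. split; auto. intros t Ht1 Ht2 Ht3. split; lra.
  - exists 0. intros t Ht. split; auto.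
Qed.

Lemma NL_gt r s : s < r -> near_left (Fin r) (fun t => s < t).
Proof. intros H. exists (r - s). split; [lra|]. intros; lra. Qed.

Lemma NL_ex rho P : ER_lt (Fin 0) rho -> near_left rho P -> exists t, P t.
Proof.
  destruct rho as [r|]; simpl; intros Hr.
  - intros [d [Hd H]]. exists (r - Rmin d r / 2). pose proof (Rmin_l d r).
    pose proof (Rmin_r d r). assert (0 < Rmin d r) by (now apply Rmin_glb_lt).
    apply H; lra.
  - intros [M H]. exists (M+1). apply H; lra.
Qed.

Lemma TL_unique f rho L1 L2 : ER_lt (Fin 0) rho ->
  tends_left f rho L1 -> tends_left f rho L2 -> L1 = L2.
Proof.
  intros Hr H1 H2. destruct L1 as [a|], L2 as [b|]; simpl in *.
  - destruct (Req_dec a b) as [e|n]; [now subst|exfalso].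
    assert (He : 0 < Rabs (a - b) / 2).
    { assert (0 < Rabs (a-b)) by (apply Rabs_pos_lt; lra). lra. }
    destruct (NL_ex _ _ Hr (NL_and _ _ _ (H1 _ He) (H2 _ He))) as [t [Ht1 Ht2]].
    pose proof (Rabs_triang (f t - b) (a - f t)).
    replace (f t - b + (a - f t)) with (a - b) in H by ring.
    rewrite Rabs_minus_sym in Ht1. lra.
  - exfalso. destruct (NL_ex _ _ Hr (NL_and _ _ _ (H1 1 Rlt_0_1) (H2 (a+1)))) as [t [Ht1 Ht2]].
    pose proof (Rle_abs (f t - a)). lra.
  - exfalso. destruct (NL_ex _ _ Hr (NL_and _ _ _ (H2 1 Rlt_0_1) (H1 (b+1)))) as [t [Ht1 Ht2]].
    pose proof (Rle_abs (f t - b)). lra.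
  - reflexivity.
Qed.

Lemma TL_ext f g rho L : (forall t, 0 < t -> ER_lt (Fin t) rho -> f t = g t) ->
  ER_lt (Fin 0) rho -> tends_left f rho L -> tends_left g rho L.
Proof.
  intros Hfg Hr H. destruct L as [l|]; simpl in *.
  - intros eps Heps. eapply NL_mono; [|apply (NL_and _ _ _ (H eps Heps) (NL_pos _ Hr))].
    intros t [H1 [H2 H3]]. rewrite <- Hfg; auto.
  - intros M. eapply NL_mono; [|apply (NL_and _ _ _ (H M) (NL_pos _ Hr))].
    intros t [H1 [H2 H3]]. rewrite <- Hfg; auto.
Qed.

Lemma TL_ge f r l a : 0 < r -> tends_left f (Fin r) (Fin l) ->
  near_left (Fin r) (fun t => a <= f t) -> a <= l.
Proof.
  intros Hr H Ha. destruct (Rle_or_lt a l) as [|Hlt]; auto. exfalso.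
  assert (He : 0 < a - l) by lra.
  destruct (NL_ex (Fin r) _ Hr (NL_and _ _ _ (H _ He) Ha)) as [t [H1 H2]].
  pose proof (Rle_abs (f t - l)). lra.
Qed.

Lemma TL_le f r L b : 0 < r -> tends_left f (Fin r) L ->
  near_left (Fin r) (fun t => f t <= b) -> ER_le L (Fin b).
Proof.
  intros Hr H Hb. destruct L as [l|]; simpl.
  - destruct (Rle_or_lt l b) as [|Hlt]; auto. exfalso.
    assert (He : 0 < l - b) by lra.
    destruct (NL_ex (Fin r) _ Hr (NL_and _ _ _ (H _ He) Hb)) as [t [H1 H2]].
    pose proof (Rle_abs (l - f t)). rewrite Rabs_minus_sym in H1. lra.
  - destruct (NL_ex (Fin r) _ Hr (NL_and _ _ _ (H b) Hb)) as [t [H1 H2]]. lra.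
Qed.

Lemma TL_mono f r : 0 < r ->
  (forall s t, 0 <= s -> s <= t -> t < r -> f s <= f t) ->
  exists L, tends_left f (Fin r) L /\ (forall t, 0 <= t -> t < r -> ER_le (Fin (f t)) L).
Proof.
  intros Hr Hm.
  set (E := fun y => exists t, 0 <= t /\ t < r /\ y = f t).
  destruct (classic (bound E)) as [Hb|Hnb].
  - assert (Hne : exists y, E y) by (exists (f 0); exists 0; repeat split; lra).
    destruct (completeness E Hb Hne) as [L [HL1 HL2]].
    exists (Fin L). split.
    + intros eps Heps. simpl.
      destruct (classic (exists t, 0 <= t /\ t < r /\ L - eps < f t)) as [[t0 [Ht0 [Ht0' Hft0]]]|Hno].
      * exists (r - t0). split; [lra|]. intros t Ht1 Ht2 Ht3.
        assert (f t0 <= f t) by (apply Hm; lra).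
        assert (f t <= L) by (apply HL1; exists t; repeat split; lra).
        rewrite Rabs_left1 by lra. lra.
      * exfalso. assert (L <= L - eps); [|lra]. apply HL2. intros y [t [Ht1 [Ht2 ->]]].
        destruct (Rle_or_lt (f t) (L - eps)) as [|Hc]; auto. exfalso; apply Hno; eauto.
    + intros t Ht1 Ht2. simpl. apply HL1. exists t; repeat split; auto.
  - exists Inf. split; [|intros; simpl; auto].
    intros M. simpl. destruct (classic (exists t, 0 <= t /\ t < r /\ M < f t)) as [[t0 [Ht0 [Ht0' Hft0]]]|Hno].
    + exists (r - t0). split; [lra|]. intros t Ht1 Ht2 Ht3.
      assert (f t0 <= f t) by (apply Hm; lra). lra.
    + exfalso. apply Hnb. exists M. intros y [t [Ht1 [Ht2 ->]]].
      destruct (Rle_or_lt (f t) M) as [|Hc]; auto. exfalso; apply Hno; eauto.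
Qed.

Definition Dl (r : R) := fun t => 0 < t < r.

Lemma TL_lim f r l : 0 < r -> tends_left f (Fin r) (Fin l) -> limit1_in f (Dl r) l r.
Proof.
  intros Hr H eps Heps. destruct (H eps Heps) as [d [Hd Hd']].
  exists d. split; auto. intros x [[Hx1 Hx2] Hx3]. simpl in *. unfold Rdist in *.
  apply Hd'; try lra. rewrite Rabs_left in Hx3 by lra. lra.
Qed.

Lemma lim_TL f r l : 0 < r -> limit1_in f (Dl r) l r -> tends_left f (Fin r) (Fin l).
Proof.
  intros Hr H eps Heps. destruct (H eps Heps) as [d [Hd Hd']].
  exists (Rmin d r). split; [now apply Rmin_glb_lt|]. intros t Ht1 Ht2 Ht3.
  pose proof (Rmin_l d r); pose proof (Rmin_r d r).
  apply (Hd' t). split.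
  - unfold Dl; lra.
  - simpl. unfold Rdist. rewrite Rabs_left by lra. lra.
Qed.

Lemma lim_ext f g D l x : (forall t, D t -> f t = g t) -> limit1_in f D l x -> limit1_in g D l x.
Proof.
  intros Hfg H eps Heps. destruct (H eps Heps) as [d [Hd Hd']].
  exists d. split; auto. intros t [Ht1 Ht2]. rewrite <- Hfg by auto. apply Hd'; auto.
Qed.

Lemma lim_const c D x : limit1_in (fun _ => c) D c x.
Proof.
  intros eps Heps. exists 1. split; [lra|]. intros t _. simpl. unfold Rdist.
  rewrite Rminus_diag, Rabs_R0. lra.
Qed.

Lemma cont_TL f r : 0 < r -> continuity_pt f r -> tends_left f (Fin r) (Fin (f r)).
Proof.
  intros Hr H. apply lim_TL; auto. intros eps Heps. destruct (H eps Heps) as [d [Hd Hd']].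
  exists d. split; auto. intros t [Ht1 Ht2]. apply Hd'. split; auto.
  unfold D_x, no_cond. split; auto. unfold Dl in Ht1. lra.
Qed.

Lemma sum_nonneg_le (u : nat -> R) N : (forall k, (k <= N)%nat -> 0 <= u k) -> 0 <= sum_f_R0 u N.
Proof.
  induction N; intros H; simpl.
  - apply H; lia.
  - pose proof (H (S N) (le_n _)). assert (0 <= sum_f_R0 u N) by (apply IHN; intros; apply H; lia). lra.
Qed.

Lemma sum_le_term (u : nat -> R) N j : (forall k, (k <= N)%nat -> 0 <= u k) -> (j <= N)%nat ->
  u j <= sum_f_R0 u N.
Proof.
  induction N; intros H Hj.
  - assert (j = 0%nat) by lia. subst. simpl. lra.
  - simpl. destruct (Nat.eq_dec j (S N)) as [->|n].
    + assert (0 <= sum_f_R0 u N) by (apply sum_nonneg_le; intros; apply H; lia). lra.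
    + assert (u j <= sum_f_R0 u N) by (apply IHN; [intros; apply H; lia| lia]).
      pose proof (H (S N) (le_n _)). lra.
Qed.

Lemma Series_Uncv u : ex_series u -> Un_cv (fun n => sum_f_R0 u n) (Series u).
Proof. intros H. apply is_series_Reals. now apply Series_correct. Qed.

Lemma Series_ge_sum u N : (forall n, 0 <= u n) -> ex_series u -> sum_f_R0 u N <= Series u.
Proof. intros H1 H2. apply sum_incr; auto. now apply Series_Uncv. Qed.

Lemma Series_ge_term u j : (forall n, 0 <= u n) -> ex_series u -> u j <= Series u.
Proof.
  intros H1 H2. eapply Rle_trans; [|apply (Series_ge_sum u j); auto].
  apply sum_le_term; auto.
Qed.

Lemma pow_lt_strict s t j : 0 <= s -> s < t -> (1 <= j)%nat -> s ^ j < t ^ j.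
Proof.
  intros Hs Hst Hj. induction j; [lia|].
  destruct j.
  - simpl; lra.
  - assert (s ^ S j < t ^ S j) by (apply IHj; lia).
    assert (0 <= s ^ S j) by (apply pow_le; lra).
    change (s * s ^ S j < t * t ^ S j). nra.
Qed.

Lemma CVabs a t : 0 <= t -> Rbar_lt t (CV_radius a) -> Rbar_lt (Rabs t) (CV_radius a).
Proof. intros H1 H2. now rewrite Rabs_pos_eq. Qed.

Lemma PS_mono a s t : (forall n, 0 <= a n) -> 0 <= s -> s <= t -> Rbar_lt t (CV_radius a) ->
  PSeries a s <= PSeries a t.
Proof.
  intros Ha Hs Hst Ht. unfold PSeries. apply Series_le.
  - intros n. split.
    + apply Rmult_le_pos; auto. apply pow_le; lra.
    + apply Rmult_le_compat_l; auto. apply pow_incr; lra.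
  - apply ex_series_inside. apply CVabs; auto; lra.
Qed.

Lemma PS_ge_term a t j : (forall n, 0 <= a n) -> 0 <= t -> Rbar_lt t (CV_radius a) ->
  a j * t ^ j <= PSeries a t.
Proof.
  intros Ha Ht Hr. unfold PSeries. apply (Series_ge_term (fun k => a k * t ^ k)).
  - intros n. apply Rmult_le_pos; auto. apply pow_le; lra.
  - apply ex_series_inside. now apply CVabs.
Qed.

Lemma PS_strict a s t j : (forall n, 0 <= a n) -> 0 < a j -> (1 <= j)%nat ->
  0 <= s -> s < t -> Rbar_lt t (CV_radius a) ->
  PSeries a s < PSeries a t.
Proof.
  intros Ha Haj Hj Hs Hst Ht.
  assert (Ht' : Rbar_lt (Rabs t) (CV_radius a)) by (apply CVabs; auto; lra).
  assert (Hs' : Rbar_lt (Rabs s) (CV_radius a)).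
  { rewrite Rabs_pos_eq by lra. eapply Rbar_le_lt_trans; [|exact Ht]. simpl; lra. }
  assert (E : PSeries a t - PSeries a s = Series (fun n => a n * t ^ n - a n * s ^ n)).
  { unfold PSeries. rewrite Series_minus; auto; apply ex_series_inside; auto. }
  assert (a j * t ^ j - a j * s ^ j <= Series (fun n => a n * t ^ n - a n * s ^ n)).
  { apply (Series_ge_term (fun n => a n * t ^ n - a n * s ^ n)).
    - intros n. assert (a n * s ^ n <= a n * t ^ n); [|lra].
      apply Rmult_le_compat_l; auto. apply pow_incr; lra.
    - apply (ex_series_minus (fun n => a n * t ^ n) (fun n => a n * s ^ n));
        apply ex_series_inside; auto. }
  assert (s ^ j < t ^ j) by (apply pow_lt_strict; auto). nra.
Qed.

Lemma sum_kdelta (f : nat -> R) n : sum_f_R0 (fun k => kdelta k * f k) n = f 0%nat.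
Proof. induction n; simpl; [lra|]. rewrite IHn. simpl. lra. Qed.

Lemma is_series_kdelta (f : nat -> R) : is_series (fun k => kdelta k * f k) (f 0%nat).
Proof.
  apply is_series_Reals. intros eps Heps. exists 0%nat. intros n _.
  rewrite sum_kdelta. unfold Rdist. rewrite Rminus_diag, Rabs_R0. lra.
Qed.

Lemma w_rec h w : is_inv_one_minus h w ->
  forall n, w n = kdelta n + sum_f_R0 (fun k => h k * w (n - k)%nat) n.
Proof.
  intros hw n. specialize (hw n).
  rewrite (sum_eq _ (fun k => kdelta k * w (n - k)%nat - h k * w (n - k)%nat)) in hw
    by (intros; ring).
  rewrite minus_sum in hw. rewrite (sum_kdelta (fun k => w (n - k)%nat)) in hw.
  rewrite Nat.sub_0_r in hw. lra.
Qed.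

Lemma w_nonneg h w : h 0%nat = 0 -> (forall k, 0 <= h k) -> is_inv_one_minus h w ->
  forall n, 0 <= w n.
Proof.
  intros h0 hnn hw n. induction n as [n IH] using (well_founded_induction Wf_nat.lt_wf).
  rewrite (w_rec h w hw n).
  assert (0 <= kdelta n) by (destruct n; simpl; lra).
  assert (0 <= sum_f_R0 (fun k => h k * w (n - k)%nat) n); [|lra].
  apply sum_nonneg_le. intros k Hk. destruct k.
  - rewrite h0; lra.
  - apply Rmult_le_pos; auto. apply IH. lia.
Qed.

Lemma w_0 h w : h 0%nat = 0 -> is_inv_one_minus h w -> w 0%nat = 1.
Proof. intros h0 hw. rewrite (w_rec h w hw 0). simpl. rewrite h0. lra. Qed.

Lemma h_le_w h w : h 0%nat = 0 -> (forall k, 0 <= h k) -> is_inv_one_minus h w ->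
  forall n, h n <= w n.
Proof.
  intros h0 hnn hw n. pose proof (w_nonneg h w h0 hnn hw) as wnn.
  rewrite (w_rec h w hw n).
  assert (0 <= kdelta n) by (destruct n; simpl; lra).
  assert (h n * w (n - n)%nat <= sum_f_R0 (fun k => h k * w (n - k)%nat) n).
  { apply (sum_le_term (fun k => h k * w (n - k)%nat)); auto.
    intros; apply Rmult_le_pos; auto. }
  rewrite Nat.sub_diag, (w_0 h w h0 hw) in H0. lra.
Qed.

Lemma CVw_le_CVh h w : h 0%nat = 0 -> (forall k, 0 <= h k) -> is_inv_one_minus h w ->
  Rbar_le (CV_radius w) (CV_radius h).
Proof.
  intros h0 hnn hw. destruct (CV_radius_bounded w) as [_ lst].
  destruct (CV_radius_bounded h) as [ub _].
  apply lst. intros r [M HM]. apply ub. exists M. intros n.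
  eapply Rle_trans; [|apply (HM n)]. rewrite !Rabs_mult.
  apply Rmult_le_compat_r; [apply Rabs_pos|].
  pose proof (w_nonneg h w h0 hnn hw n). pose proof (h_le_w h w h0 hnn hw n).
  rewrite !Rabs_pos_eq; auto.
Qed.

Lemma CVw_ge h w t : h 0%nat = 0 -> (forall k, 0 <= h k) -> is_inv_one_minus h w ->
  0 <= t -> Rbar_lt t (CV_radius h) -> PSeries h t < 1 -> Rbar_le t (CV_radius w).
Proof.
  intros h0 hnn hw Ht Htr HH.
  pose proof (w_nonneg h w h0 hnn hw) as wnn.
  set (SW := fun N => sum_f_R0 (fun n => w n * t ^ n) N).
  set (A := fun N => sum_f_R0 (fun n => h n * t ^ n) N).
  assert (Hex : ex_series (fun n => h n * t ^ n)) by (apply ex_series_inside; now apply CVabs).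
  assert (HA : forall N, A N <= PSeries h t).
  { intros N. apply Series_ge_sum; auto. intros; apply Rmult_le_pos; auto; apply pow_le; lra. }
  assert (HA0 : forall N, 0 <= A N).
  { intros N. apply cond_pos_sum. intros; apply Rmult_le_pos; auto; apply pow_le; lra. }
  assert (HS0 : forall N, 0 <= SW N).
  { intros N. apply cond_pos_sum. intros; apply Rmult_le_pos; auto; apply pow_le; lra. }
  assert (HSeq : forall N, SW N = 1 + sum_f_R0
      (fun n => sum_f_R0 (fun k => (h k * t ^ k) * (w (n - k)%nat * t ^ (n - k))) n) N).
  { intros N. unfold SW.
    rewrite (sum_eq _ (fun n => kdelta n * t ^ n +
      sum_f_R0 (fun k => (h k * t ^ k) * (w (n - k)%nat * t ^ (n - k))) n)).
    - rewrite plus_sum, (sum_kdelta (fun n => t ^ n)). simpl. reflexivity.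
    - intros n _. rewrite (w_rec h w hw n). rewrite Rmult_plus_distr_r. f_equal.
      rewrite Rmult_comm, scal_sum. apply sum_eq. intros k Hk.
      replace (t ^ n) with (t ^ k * t ^ (n - k)) by (rewrite <- pow_add; f_equal; lia). ring. }
  assert (HC : forall N, sum_f_R0
      (fun n => sum_f_R0 (fun k => (h k * t ^ k) * (w (n - k)%nat * t ^ (n - k))) n) N
      <= A N * SW N).
  { intros N. destruct N.
    - unfold A, SW. simpl. rewrite h0. lra.
    - unfold A, SW. rewrite (cauchy_finite (fun n => h n * t ^ n) (fun n => w n * t ^ n)) by lia.
      assert (0 <= sum_f_R0 (fun k => sum_f_R0 (fun l => h (S (l + k)) * t ^ S (l + k) *
               (w (S N - l)%nat * t ^ (S N - l))) (Init.Nat.pred (S N - k))) (Init.Nat.pred (S N))); [|lra].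
      apply cond_pos_sum. intros k. apply cond_pos_sum. intros l.
      apply Rmult_le_pos; apply Rmult_le_pos; auto; apply pow_le; lra. }
  assert (HSb : forall N, SW N <= / (1 - PSeries h t)).
  { intros N. specialize (HSeq N). specialize (HC N). specialize (HA N). specialize (HS0 N).
    specialize (HA0 N).
    assert (SW N * (1 - PSeries h t) <= 1) by nra.
    apply (Rmult_le_reg_r (1 - PSeries h t)); [lra|]. rewrite Rinv_l by lra. lra. }
  destruct (CV_radius_bounded w) as [ub _]. apply ub.
  exists (/ (1 - PSeries h t)). intros n. rewrite Rabs_pos_eq.
  - eapply Rle_trans; [|apply (HSb n)]. unfold SW. apply (sum_le_term (fun n => w n * t ^ n)); auto.
    intros; apply Rmult_le_pos; auto; apply pow_le; lra.
  - apply Rmult_le_pos; auto; apply pow_le; lra.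
Qed.

Lemma prod_one h w x : h 0%nat = 0 -> (forall k, 0 <= h k) -> is_inv_one_minus h w ->
  Rbar_lt (Rabs x) (CV_radius w) -> (1 - PSeries h x) * PSeries w x = 1.
Proof.
  intros h0 hnn hw Hx.
  assert (Hxh : Rbar_lt (Rabs x) (CV_radius h)).
  { eapply Rbar_lt_le_trans; [exact Hx|]. now apply CVw_le_CVh. }
  set (a := fun k => (kdelta k - h k) * x ^ k).
  set (b := fun k => w k * x ^ k).
  assert (Ha : is_series a (1 - PSeries h x)).
  { pose proof (is_series_minus _ _ _ _ (is_series_kdelta (fun k => x ^ k))
       (Series_correct _ (ex_series_inside h x Hxh))) as HH.
    eapply is_series_ext; [|exact HH]. intros n. unfold a. simpl.
    change (plus (kdelta n * x ^ n) (opp (h n * x ^ n))) with (kdelta n * x ^ n + - (h n * x ^ n)).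
    ring. }
  assert (Hb : is_series b (PSeries w x)) by (apply Series_correct, ex_series_inside; auto).
  assert (Haa : ex_series (fun n => Rabs (a n))).
  { apply (@ex_series_le _ R_CompleteNormedModule _ (fun n => kdelta n * Rabs (x ^ n) + Rabs (h n * x ^ n))).
    - intros n. change (norm (Rabs (a n))) with (Rabs (Rabs (a n))). rewrite Rabs_Rabsolu.
      unfold a. rewrite Rmult_minus_distr_r.
      eapply Rle_trans; [apply Rabs_triang|]. rewrite Rabs_Ropp.
      rewrite (Rabs_mult (kdelta n)), (Rabs_pos_eq (kdelta n)) by (destruct n; simpl; lra). lra.
    - apply (ex_series_plus (fun n => kdelta n * Rabs (x ^ n)) (fun n => Rabs (h n * x ^ n))).
      + eexists. apply (is_series_kdelta (fun n => Rabs (x ^ n))).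
      + now apply CV_disk_inside. }
  assert (Hbb : ex_series (fun n => Rabs (b n))) by (now apply CV_disk_inside).
  pose proof (is_series_mult a b _ _ Ha Hb Haa Hbb) as HM.
  assert (HM' : is_series (fun n => kdelta n * x ^ n) ((1 - PSeries h x) * PSeries w x)).
  { eapply is_series_ext; [|exact HM]. intros n. simpl. unfold a, b.
    rewrite (sum_eq _ (fun k => ((kdelta k - h k) * w (n - k)%nat) * x ^ n)).
    - rewrite <- scal_sum, (hw n). ring.
    - intros k Hk. replace (x ^ n) with (x ^ k * x ^ (n - k)) by (rewrite <- pow_add; f_equal; lia). ring. }
  pose proof (is_series_unique _ _ HM') as E1.
  pose proof (is_series_unique _ _ (is_series_kdelta (fun n => x ^ n))) as E2.
  simpl in E2. rewrite E1 in E2. exact E2.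
Qed.

Lemma locally_lt x (Rr : Rbar) : Rbar_lt (Rabs x) Rr -> locally x (fun y => Rbar_lt (Rabs y) Rr).
Proof.
  intros H. destruct Rr as [r| |]; simpl in H.
  - assert (He : 0 < r - Rabs x) by lra. exists (mkposreal _ He). intros y Hy.
    simpl. change (Rabs (y - x) < r - Rabs x) in Hy.
    pose proof (Rabs_triang_inv y x). lra.
  - exists (mkposreal 1 Rlt_0_1). intros; simpl; auto.
  - contradiction.
Qed.

Lemma dpl_loc f g x l : locally x (fun y => g y = f y) -> derivable_pt_lim g x l -> derivable_pt_lim f x l.
Proof.
  intros Hl Hg. apply is_derive_Reals. apply is_derive_Reals in Hg.
  eapply is_derive_ext_loc; eauto.
Qed.

Lemma H_deriv h x : Rbar_lt (Rabs x) (CV_radius h) ->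
  derivable_pt_lim (PSeries h) x (PSeries (PS_derive h) x).
Proof. intros H. apply is_derive_Reals. now apply is_derive_PSeries. Qed.

Lemma CV_shiftc h : CV_radius (shift_coef h) = CV_radius h.
Proof.
  rewrite <- (CV_radius_incr_1 h). apply CV_radius_ext. intros [|n]; reflexivity.
Qed.

Lemma PS_shift h y : PSeries (shift_coef h) y = y * PSeries h y.
Proof.
  rewrite <- PSeries_incr_1. apply PSeries_ext. intros [|n]; reflexivity.
Qed.

Lemma mu_eq h x : Rbar_lt (Rabs x) (CV_radius h) ->
  mu (shift_coef h) x = PSeries h x + x * PSeries (PS_derive h) x.
Proof.
  intros Hx. unfold mu. apply deriv_is.
  apply (dpl_loc (ps_eval (shift_coef h)) (fun y => y * PSeries h y)).
  - eapply filter_imp; [|apply (locally_lt x _ Hx)]. intros y Hy. simpl.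
    rewrite ps_eval_PS by (now rewrite CV_shiftc). symmetry; apply PS_shift.
  - replace (PSeries h x + x * PSeries (PS_derive h) x)
      with (1 * PSeries h x + id x * PSeries (PS_derive h) x) by (unfold id; ring).
    apply (derivable_pt_lim_mult id (PSeries h)); [apply derivable_pt_lim_id|].
    now apply H_deriv.
Qed.

Lemma one_minus_H_ne h w x : h 0%nat = 0 -> (forall k, 0 <= h k) -> is_inv_one_minus h w ->
  Rbar_lt (Rabs x) (CV_radius w) -> 1 - PSeries h x <> 0.
Proof.
  intros h0 hnn hw Hx E. pose proof (prod_one h w x h0 hnn hw Hx). rewrite E in H. lra.
Qed.

Lemma psi_eq h w x : h 0%nat = 0 -> (forall k, 0 <= h k) -> is_inv_one_minus h w ->
  Rbar_lt (Rabs x) (CV_radius w) ->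
  psi w x = x * PSeries (PS_derive h) x / (1 - PSeries h x).
Proof.
  intros h0 hnn hw Hx.
  assert (Hxh : Rbar_lt (Rabs x) (CV_radius h)).
  { eapply Rbar_lt_le_trans; [exact Hx|]. now apply CVw_le_CVh. }
  pose proof (one_minus_H_ne h w x h0 hnn hw Hx) as Hne.
  assert (Hev : forall y, Rbar_lt (Rabs y) (CV_radius w) -> ps_eval w y = 1 / (1 - PSeries h y)).
  { intros y Hy. rewrite ps_eval_PS by auto. pose proof (prod_one h w y h0 hnn hw Hy).
    pose proof (one_minus_H_ne h w y h0 hnn hw Hy). unfold Rdiv; rewrite Rmult_1_l.
    apply (Rmult_eq_reg_l (1 - PSeries h y)); auto. rewrite Rinv_r by auto. auto. }
  assert (Hd : derivable_pt_lim (ps_eval w) x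
     ((0 * (1 - PSeries h x) - (0 - PSeries (PS_derive h) x) * 1) / (1 - PSeries h x)²)).
  { apply (dpl_loc (ps_eval w) (fct_cte 1 / (fct_cte 1 - PSeries h))%F).
    - eapply filter_imp; [|apply (locally_lt x _ Hx)]. intros y Hy. simpl.
      rewrite Hev by auto. unfold div_fct, minus_fct, fct_cte. reflexivity.
    - exact (derivable_pt_lim_div (fct_cte 1) (fct_cte 1 - PSeries h)%F x 0 (0 - PSeries (PS_derive h) x)
        (derivable_pt_lim_const 1 x)
        (derivable_pt_lim_minus _ _ _ _ _ (derivable_pt_lim_const 1 x) (H_deriv h x Hxh)) Hne). }
  unfold psi. rewrite (deriv_is _ _ _ Hd). rewrite Hev by auto.
  unfold Rsqr. field. auto.
Qed.

Lemma ER_lt_not_le x y : ER_lt x y <-> ~ ER_le y x.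
Proof. destruct x, y; simpl; split; intros; try lra; tauto. Qed.

Lemma types_equiv w p rw rp nu m : is_radius w rw -> is_radius p rp ->
  ER_lt (Fin 0) rw -> ER_lt (Fin 0) rp ->
  tends_left (psi w) rw nu -> tends_left (mu p) rp m ->
  ER_lt (Fin 0) nu -> ER_lt (Fin 0) m ->
  (ER_le (Fin 1) nu <-> ER_le (Fin 1) m) ->
  forall T, weight_type w T <-> offspring_type p T.
Proof.
  intros Rw Rp Hw Hp Tw Tp Nw Np Heq T. destruct T; simpl.
  - split.
    + intros [rho [nu' [H1 [H2 [H3 H4]]]]].
      rewrite (radius_unique _ _ _ H1 Rw) in *. rewrite (TL_unique _ _ _ _ Hw H3 Tw) in H4.
      exists rp, m. refine (conj Rp (conj Hp (conj Tp _))). tauto.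
    + intros [rho [m' [H1 [H2 [H3 H4]]]]].
      rewrite (radius_unique _ _ _ H1 Rp) in *. rewrite (TL_unique _ _ _ _ Hp H3 Tp) in H4.
      exists rw, nu. refine (conj Rw (conj Hw (conj Tw _))). tauto.
  - split.
    + intros [rho [nu' [H1 [H2 [H3 [H4 H5]]]]]].
      rewrite (radius_unique _ _ _ H1 Rw) in *. rewrite (TL_unique _ _ _ _ Hw H3 Tw) in H4, H5.
      exists rp, m. refine (conj Rp (conj Hp (conj Tp (conj Np _)))). rewrite ER_lt_not_le in *. tauto.
    + intros [rho [m' [H1 [H2 [H3 [H4 H5]]]]]].
      rewrite (radius_unique _ _ _ H1 Rp) in *. rewrite (TL_unique _ _ _ _ Hp H3 Tp) in H4, H5.
      exists rw, nu. refine (conj Rw (conj Hw (conj Tw (conj Nw _)))). rewrite ER_lt_not_le in *. tauto.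
  - split; intros H.
    + rewrite <- (radius_unique _ _ _ H Rw) in Hw. simpl in Hw; lra.
    + rewrite <- (radius_unique _ _ _ H Rp) in Hp. simpl in Hp; lra.
Qed.

Lemma types_zero w p : is_radius w (Fin 0) -> is_radius p (Fin 0) ->
  forall T, weight_type w T <-> offspring_type p T.
Proof.
  intros Rw Rp T. destruct T; simpl.
  - split.
    + intros [rho [nu' [H1 [H2 _]]]]. rewrite (radius_unique _ _ _ H1 Rw) in H2. simpl in H2; lra.
    + intros [rho [nu' [H1 [H2 _]]]]. rewrite (radius_unique _ _ _ H1 Rp) in H2. simpl in H2; lra.
  - split.
    + intros [rho [nu' [H1 [H2 _]]]]. rewrite (radius_unique _ _ _ H1 Rw) in H2. simpl in H2; lra.
    + intros [rho [nu' [H1 [H2 _]]]]. rewrite (radius_unique _ _ _ H1 Rp) in H2. simpl in H2; lra.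
  - tauto.
Qed.

Lemma tau_zero w : is_radius w (Fin 0) -> tau_spec w (Fin 0) /\ forall y, tau_spec w y -> y = Fin 0.
Proof.
  intros Rw. split.
  - exists (Fin 0). split; auto.
  - intros y [rho [H1 [[_ H2]|[H2 _]]]]; auto.
    rewrite (radius_unique _ _ _ H1 Rw) in H2. simpl in H2; lra.
Qed.

Lemma t0_zero p : is_radius p (Fin 0) -> t0_spec p (Fin 0) /\ forall y, t0_spec p y -> y = Fin 0.
Proof.
  intros Rp. split.
  - exists (Fin 0). split; auto.
  - intros y [rho [H1 [[_ H2]|[H2 _]]]]; auto.
    rewrite (radius_unique _ _ _ H1 Rp) in H2. simpl in H2; lra.
Qed.

Lemma tau_sol w rw nu z : is_radius w rw -> ER_lt (Fin 0) rw -> tends_left (psi w) rw nu ->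
  ER_le (Fin 1) nu -> nu <> Fin 1 -> 0 < z -> ER_lt (Fin z) rw -> psi w z = 1 ->
  (forall t, 0 < t -> ER_lt (Fin t) rw -> psi w t = 1 -> t = z) ->
  tau_spec w (Fin z) /\ forall y, tau_spec w y -> y = Fin z.
Proof.
  intros Rw Hw Tw H1 H2 Hz Hzr Hpz Hu. split.
  - exists rw. split; auto. right. split; auto. exists nu. split; auto. left.
    split; auto. split; [simpl; lra|]. left. exists z. auto.
  - intros y [rho [R1 [[R2 _]|[R2 [nu' [T1 HH]]]]]].
    + rewrite (radius_unique _ _ _ R1 Rw) in R2. subst. simpl in Hw; lra.
    + rewrite (radius_unique _ _ _ R1 Rw) in *. rewrite (TL_unique _ _ _ _ Hw T1 Tw) in HH.
      destruct HH as [[_ [Hy [[t [-> [Ht1 Ht2]]]|[_ Hc]]]]|[Hc _]].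
      * simpl in Hy. f_equal. apply Hu; auto.
      * contradiction.
      * rewrite ER_lt_not_le in Hc. contradiction.
Qed.

Lemma tau_nosol w rw nu : is_radius w rw -> ER_lt (Fin 0) rw -> tends_left (psi w) rw nu ->
  (nu = Fin 1 \/ ER_lt nu (Fin 1)) ->
  (forall t, 0 < t -> ER_lt (Fin t) rw -> psi w t <> 1) ->
  tau_spec w rw /\ forall y, tau_spec w y -> y = rw.
Proof.
  intros Rw Hw Tw H1 Hn. split.
  - exists rw. split; auto. right. split; auto. exists nu. split; auto.
    destruct H1 as [->|H1].
    + left. split; [simpl; lra|]. split; auto.
    + right. auto.
  - intros y [rho [R1 [[R2 _]|[R2 [nu' [T1 HH]]]]]].
    + rewrite (radius_unique _ _ _ R1 Rw) in R2. subst. simpl in Hw; lra.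
    + rewrite (radius_unique _ _ _ R1 Rw) in *. rewrite (TL_unique _ _ _ _ Hw T1 Tw) in HH.
      destruct HH as [[_ [Hy [[t [-> [Ht1 Ht2]]]|[-> _]]]]|[_ ->]]; auto.
      simpl in Hy. exfalso; apply (Hn t); auto.
Qed.

Lemma t0_sol p rp m z : is_radius p rp -> ER_lt (Fin 0) rp -> tends_left (mu p) rp m ->
  ER_le (Fin 1) m -> m <> Fin 1 -> 0 <= z -> ER_lt (Fin z) rp -> mu p z = 1 ->
  (forall t, 0 <= t -> ER_lt (Fin t) rp -> mu p t = 1 -> t = z) ->
  t0_spec p (Fin z) /\ forall y, t0_spec p y -> y = Fin z.
Proof.
  intros Rp Hp Tp H1 H2 Hz Hzr Hpz Hu. split.
  - exists rp. split; auto. right. split; auto. exists m. split; auto. left.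
    split; auto. left. exists z. auto.
  - intros y [rho [R1 [[R2 _]|[R2 [m' [T1 HH]]]]]].
    + rewrite (radius_unique _ _ _ R1 Rp) in R2. subst. simpl in Hp; lra.
    + rewrite (radius_unique _ _ _ R1 Rp) in *. rewrite (TL_unique _ _ _ _ Hp T1 Tp) in HH.
      destruct HH as [[_ [[t [-> [Ht0 [Ht1 Ht2]]]]|[_ Hc]]]|[_ [Hc _]]].
      * f_equal. apply Hu; auto.
      * contradiction.
      * rewrite ER_lt_not_le in Hc. contradiction.
Qed.

Lemma t0_nosol p rp m : is_radius p rp -> ER_lt (Fin 0) rp -> tends_left (mu p) rp m ->
  (m = Fin 1 \/ (ER_lt (Fin 0) m /\ ER_lt m (Fin 1))) ->
  (forall t, 0 <= t -> ER_lt (Fin t) rp -> mu p t <> 1) ->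
  t0_spec p rp /\ forall y, t0_spec p y -> y = rp.
Proof.
  intros Rp Hp Tp H1 Hn. split.
  - exists rp. split; auto. right. split; auto. exists m. split; auto.
    destruct H1 as [->|H1].
    + left. split; [simpl; lra|]. auto.
    + right. tauto.
  - intros y [rho [R1 [[R2 _]|[R2 [m' [T1 HH]]]]]].
    + rewrite (radius_unique _ _ _ R1 Rp) in R2. subst. simpl in Hp; lra.
    + rewrite (radius_unique _ _ _ R1 Rp) in *. rewrite (TL_unique _ _ _ _ Hp T1 Tp) in HH.
      destruct HH as [[_ [[t [-> [Ht0 [Ht1 Ht2]]]]|[-> _]]]|[_ [_ ->]]]; auto.
      exfalso; apply (Hn t); auto.
Qed.

Lemma toER_lt t (Rr : Rbar) : Rbar_le 0 Rr -> (ER_lt (Fin t) (toER Rr) <-> Rbar_lt t Rr).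
Proof. destruct Rr; simpl; tauto. Qed.

Lemma ge_div a b : 0 <= a -> 0 < b <= 1 -> a <= a / b.
Proof.
  intros Ha [Hb1 Hb2]. unfold Rdiv. assert (1 <= / b).
  { rewrite <- Rinv_1. apply Rinv_le_contravar; lra. } nra.
Qed.

Lemma psi_inf Hf G r c : 0 < r -> 0 < c ->
  near_left (Fin r) (fun t => Hf t < 1 /\ c <= G t) ->
  tends_left Hf (Fin r) (Fin 1) ->
  tends_left (fun t => G t / (1 - Hf t)) (Fin r) Inf.
Proof.
  intros Hr Hc Hn Hl M.
  set (K := Rmax M 0 + 1).
  assert (HK : 0 < K) by (unfold K; pose proof (Rmax_r M 0); lra).
  assert (HKM : M < K) by (unfold K; pose proof (Rmax_l M 0); lra).
  assert (He : 0 < c / K) by (apply Rdiv_lt_0_compat; auto).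
  eapply NL_mono; [|apply (NL_and _ _ _ Hn (Hl _ He))]. cbv beta.
  intros t [[H1 H2] H3]. rewrite Rabs_left in H3 by lra.
  set (u := 1 - Hf t) in *. assert (Hu : 0 < u) by (unfold u; lra).
  assert (Hu2 : u * K < c).
  { assert (u < c / K) by (unfold u; lra).
    apply (Rmult_lt_compat_r K) in H; auto. unfold Rdiv in H. rewrite Rmult_assoc, Rinv_l in H by lra. lra. }
  assert (K < G t / u); [|lra].
  apply (Rmult_lt_reg_r u); auto. unfold Rdiv. rewrite Rmult_assoc, Rinv_l by lra. lra.
Qed.

Lemma IVT_1 F b : 0 < b -> (forall a, 0 <= a <= b -> continuity_pt F a) -> F 0 < 1 -> 1 < F b ->
  exists z, 0 < z < b /\ F z = 1.
Proof.
  intros Hb Hc H0 H1.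
  destruct (Ranalysis5.IVT_interv (fun t => F t - 1) 0 b) as [z [Hz1 Hz2]]; auto; try lra.
  - intros a Ha. apply (continuity_pt_minus F (fct_cte 1)); auto.
    apply continuity_pt_const. intros x y; reflexivity.
  - exists z. assert (F z = 1) by lra. split; auto.
    destruct (Req_dec z 0); [subst; lra|]. destruct (Req_dec z b); [subst; lra|]. lra.
Qed.

Lemma Hd_nonneg h : (forall k, 0 <= h k) -> forall n, 0 <= PS_derive h n.
Proof. intros hnn n. unfold PS_derive. apply Rmult_le_pos; auto. apply pos_INR. Qed.

Lemma Hf_0 h : h 0%nat = 0 -> PSeries h 0 = 0.
Proof. intros h0. rewrite PSeries_0. auto. Qed.

Lemma Hf_strict h k0 : (forall k, 0 <= h k) -> 0 < h k0 -> (1 <= k0)%nat ->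
  forall s t, 0 <= s -> s < t -> Rbar_lt t (CV_radius h) -> PSeries h s < PSeries h t.
Proof. intros hnn Hk Hk1 s t Hs Hst Ht. eapply PS_strict; eauto. Qed.

Lemma Hf_nonneg h : h 0%nat = 0 -> (forall k, 0 <= h k) ->
  forall t, 0 <= t -> Rbar_lt t (CV_radius h) -> 0 <= PSeries h t.
Proof.
  intros h0 hnn t Ht Htr. rewrite <- (Hf_0 h h0). apply PS_mono; auto. lra.
Qed.

Lemma Hd_mono h : (forall k, 0 <= h k) ->
  forall s t, 0 <= s -> s <= t -> Rbar_lt t (CV_radius h) ->
  PSeries (PS_derive h) s <= PSeries (PS_derive h) t.
Proof.
  intros hnn s t Hs Hst Ht. apply PS_mono; auto using Hd_nonneg. now rewrite CV_radius_derive.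
Qed.

Lemma Hd_pos h k0 : (forall k, 0 <= h k) -> 0 < h k0 -> (1 <= k0)%nat ->
  forall t, 0 < t -> Rbar_lt t (CV_radius h) -> 0 < PSeries (PS_derive h) t.
Proof.
  intros hnn Hk Hk1 t Ht Htr.
  eapply Rlt_le_trans; [|apply (PS_ge_term _ t (k0 - 1)); auto using Hd_nonneg; try lra;
     now rewrite CV_radius_derive].
  apply Rmult_lt_0_compat; [|apply pow_lt; lra]. unfold PS_derive.
  replace (S (k0 - 1)) with k0 by lia. apply Rmult_lt_0_compat; auto.
  apply lt_0_INR; lia.
Qed.

Lemma Hd_nonneg_t h : (forall k, 0 <= h k) ->
  forall t, 0 <= t -> Rbar_lt t (CV_radius h) -> 0 <= PSeries (PS_derive h) t.
Proof.
  intros hnn t Ht Htr.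
  assert (Htr' : Rbar_lt t (CV_radius (PS_derive h))) by (now rewrite CV_radius_derive).
  pose proof (PS_ge_term (PS_derive h) t 0 (Hd_nonneg h hnn) Ht Htr') as HH.
  eapply Rle_trans; [|exact HH]. simpl. rewrite Rmult_1_r. apply Hd_nonneg; auto.
Qed.

Definition Ff h t := PSeries h t + t * PSeries (PS_derive h) t.

Lemma Ff_strict h k0 : (forall k, 0 <= h k) -> 0 < h k0 -> (1 <= k0)%nat ->
  forall s t, 0 <= s -> s < t -> Rbar_lt t (CV_radius h) -> Ff h s < Ff h t.
Proof.
  intros hnn Hk Hk1 s t Hs Hst Ht. unfold Ff.
  pose proof (Hf_strict h k0 hnn Hk Hk1 s t Hs Hst Ht).
  pose proof (Hd_mono h hnn s t Hs (Rlt_le _ _ Hst) Ht).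
  assert (Hsr : Rbar_lt s (CV_radius h)) by (eapply Rbar_le_lt_trans; [|exact Ht]; simpl; lra).
  pose proof (Hd_nonneg_t h hnn s Hs Hsr). nra.
Qed.

Lemma Ff_cont h t : Rbar_lt (Rabs t) (CV_radius h) -> continuity_pt (Ff h) t.
Proof.
  intros Ht. unfold Ff.
  apply (continuity_pt_plus (PSeries h) (fun t => t * PSeries (PS_derive h) t)).
  - now apply PSeries_continuity.
  - apply (continuity_pt_mult id (PSeries (PS_derive h))).
    + apply derivable_continuous_pt. apply derivable_pt_id.
    + apply PSeries_continuity. now rewrite CV_radius_derive.
Qed.

Lemma Ff_0 h : h 0%nat = 0 -> Ff h 0 = 0.
Proof. intros h0. unfold Ff. rewrite Hf_0 by auto. ring. Qed.

Definition Goal h w := (forall T, weight_type w T <-> offspring_type (shift_coef h) T) /\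
  (exists x, tau_spec w x /\ t0_spec (shift_coef h) x /\ (forall y, tau_spec w y -> y = x) /\
     (forall y, t0_spec (shift_coef h) y -> y = x)).

Lemma Hlt1 h w t : h 0%nat = 0 -> (forall k, 0 <= h k) -> is_inv_one_minus h w ->
  0 <= t -> Rbar_lt t (CV_radius w) -> PSeries h t < 1.
Proof.
  intros h0 hnn hw Ht Htr.
  assert (Hx : Rbar_lt (Rabs t) (CV_radius w)) by (now apply CVabs).
  pose proof (prod_one h w t h0 hnn hw Hx) as HP.
  pose proof (PS_ge_term w t 0 (w_nonneg h w h0 hnn hw) Ht Htr) as HW.
  rewrite (w_0 h w h0 hw) in HW. simpl in HW. nra.
Qed.

Lemma exists_between (x : R) (Rr : Rbar) d : Rbar_lt x Rr -> 0 < d ->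
  exists t, x < t < x + d /\ Rbar_lt t Rr.
Proof.
  intros H Hd. destruct Rr as [r| |]; simpl in H.
  - exists (x + Rmin d (r - x) / 2). pose proof (Rmin_l d (r - x)). pose proof (Rmin_r d (r - x)).
    assert (0 < Rmin d (r - x)) by (apply Rmin_glb_lt; lra). simpl. repeat split; lra.
  - exists (x + d / 2). simpl. repeat split; auto; lra.
  - contradiction.
Qed.

Lemma Ff_inj h k0 : (forall k, 0 <= h k) -> 0 < h k0 -> (1 <= k0)%nat ->
  forall s t, 0 <= s -> 0 <= t -> Rbar_lt s (CV_radius h) -> Rbar_lt t (CV_radius h) ->
  Ff h s = Ff h t -> s = t.
Proof.
  intros hnn Hk Hk1 s t Hs Ht Hsr Htr E.
  destruct (Rtotal_order s t) as [Hlt|[Heq|Hgt]]; auto.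
  - pose proof (Ff_strict h k0 hnn Hk Hk1 s t Hs Hlt Htr). lra.
  - pose proof (Ff_strict h k0 hnn Hk Hk1 t s Ht Hgt Hsr). lra.
Qed.

Lemma radius_p h : is_radius (shift_coef h) (toER (CV_radius h)).
Proof. pose proof (radius_CV (shift_coef h)) as HH. rewrite CV_shiftc in HH. exact HH. Qed.

Lemma Ff_mono_TL h k0 R : (forall k, 0 <= h k) -> 0 < h k0 -> (1 <= k0)%nat ->
  0 < R -> Rbar_le R (CV_radius h) ->
  exists L, tends_left (Ff h) (Fin R) L /\ (forall t, 0 <= t -> t < R -> ER_le (Fin (Ff h t)) L).
Proof.
  intros hnn Hk Hk1 HR HRh. apply TL_mono; auto. intros s t Hs Hst Ht.
  destruct (Req_dec s t); [subst; lra|]. apply Rlt_le. eapply Ff_strict; eauto; [lra|].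
  eapply Rbar_lt_le_trans; [|exact HRh]. simpl; lra.
Qed.

Lemma mu_TL h L rho : ER_lt (Fin 0) rho ->
  (forall t, 0 < t -> ER_lt (Fin t) rho -> Rbar_lt t (CV_radius h)) ->
  tends_left (Ff h) rho L -> tends_left (mu (shift_coef h)) rho L.
Proof.
  intros Hr Hin HT. eapply TL_ext; [|exact Hr|exact HT]. intros t Ht Htr.
  rewrite mu_eq; [reflexivity|]. rewrite Rabs_pos_eq by lra. auto.
Qed.

Lemma psi_Ff h w t : h 0%nat = 0 -> (forall k, 0 <= h k) -> is_inv_one_minus h w ->
  0 <= t -> Rbar_lt t (CV_radius w) -> (psi w t = 1 <-> Ff h t = 1).
Proof.
  intros h0 hnn hw Ht Htr. rewrite (psi_eq h w t h0 hnn hw) by (now apply CVabs).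
  pose proof (Hlt1 h w t h0 hnn hw Ht Htr). unfold Ff. split; intros E.
  - apply (Rmult_eq_compat_r (1 - PSeries h t)) in E. unfold Rdiv in E.
    rewrite Rmult_assoc, Rinv_l in E by lra. lra.
  - replace (t * PSeries (PS_derive h) t) with (1 - PSeries h t) by lra. field. lra.
Qed.

Lemma caseA h w k0 rw : h 0%nat = 0 -> (forall k, 0 <= h k) -> is_inv_one_minus h w ->
  0 < h k0 -> (1 <= k0)%nat ->
  CV_radius w = Finite rw -> 0 < rw -> Rbar_lt rw (CV_radius h) -> Goal h w.
Proof.
  intros h0 hnn hw Hk Hk1 ERw Hrw HrwR.
  assert (Rw : is_radius w (Fin rw)) by (pose proof (radius_CV w) as HH; rewrite ERw in HH; exact HH).
  pose proof (radius_p h) as Rp.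
  pose proof (CV_radius_ge_0 h) as Rh0.
  assert (Hlt : forall t, 0 <= t -> t < rw -> PSeries h t < 1).
  { intros t Ht1 Ht2. apply (Hlt1 h w); auto. rewrite ERw. exact Ht2. }
  assert (Hin : forall t, 0 <= t -> t <= rw -> Rbar_lt (Rabs t) (CV_radius h)).
  { intros t Ht1 Ht2. rewrite Rabs_pos_eq by lra. eapply Rbar_le_lt_trans; [|exact HrwR]. simpl; lra. }
  assert (Hcont : continuity_pt (PSeries h) rw) by (apply PSeries_continuity; apply Hin; lra).
  assert (Hrw1 : PSeries h rw = 1).
  { destruct (Rtotal_order (PSeries h rw) 1) as [Hl|[He|Hg]]; auto; exfalso.
    - destruct (Hcont (1 - PSeries h rw)) as [alp [Halp Hc]]; [lra|].
      destruct (exists_between rw (CV_radius h) alp HrwR Halp) as [t [[Ht1 Ht2] Ht3]].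
      assert (Hd : dist R_met (PSeries h t) (PSeries h rw) < 1 - PSeries h rw).
      { apply Hc. split.
        - unfold D_x, no_cond. split; auto. lra.
        - simpl. unfold Rdist. rewrite Rabs_pos_eq; lra. }
      simpl in Hd. unfold Rdist in Hd. pose proof (Rle_abs (PSeries h t - PSeries h rw)).
      assert (Hht : PSeries h t < 1) by lra.
      pose proof (CVw_ge h w t h0 hnn hw ltac:(lra) Ht3 Hht) as HH. rewrite ERw in HH. simpl in HH. lra.
    - destruct (Hcont (PSeries h rw - 1)) as [alp [Halp Hc]]; [lra|].
      set (t := rw - Rmin alp rw / 2).
      assert (0 < Rmin alp rw) by (apply Rmin_glb_lt; lra).
      pose proof (Rmin_l alp rw). pose proof (Rmin_r alp rw).
      assert (Hd : dist R_met (PSeries h t) (PSeries h rw) < PSeries h rw - 1).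
      { apply Hc. split.
        - unfold D_x, no_cond. split; auto. unfold t; lra.
        - simpl. unfold Rdist. rewrite Rabs_left; unfold t; lra. }
      simpl in Hd. unfold Rdist in Hd. pose proof (Rle_abs (PSeries h rw - PSeries h t)).
      rewrite Rabs_minus_sym in Hd. pose proof (Hlt t ltac:(unfold t; lra) ltac:(unfold t; lra)). lra. }
  assert (Hdrw : 0 < PSeries (PS_derive h) rw).
  { apply (Hd_pos h k0); auto. }
  assert (HFrw : 1 < Ff h rw) by (unfold Ff; rewrite Hrw1; nra).
  assert (HcF : forall a, 0 <= a <= rw -> continuity_pt (Ff h) a).
  { intros a Ha. apply Ff_cont. apply Hin; lra. }
  assert (HF0 : Ff h 0 < 1) by (rewrite Ff_0 by auto; lra).
  destruct (IVT_1 (Ff h) rw Hrw HcF HF0 HFrw) as [z [Hz Hz1]].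
  assert (Hzr : Rbar_lt z (CV_radius h)) by (pose proof (Hin z ltac:(lra) ltac:(lra)) as HH; rewrite Rabs_pos_eq in HH by lra; exact HH).
  assert (Tw : tends_left (psi w) (Fin rw) Inf).
  { apply (TL_ext (fun t => t * PSeries (PS_derive h) t / (1 - PSeries h t))); [| simpl; lra |].
    - intros t Ht Htr. simpl in Htr. symmetry. apply psi_eq; auto. rewrite ERw.
      rewrite Rabs_pos_eq by lra. exact Htr.
    - assert (Hrw2 : Rbar_lt (rw / 2) (CV_radius h)).
      { pose proof (Hin (rw/2) ltac:(lra) ltac:(lra)) as HH. rewrite Rabs_pos_eq in HH by lra. exact HH. }
      pose proof (Hd_pos h k0 hnn Hk Hk1 (rw/2) ltac:(lra) Hrw2).
      apply (psi_inf (PSeries h) (fun t => t * PSeries (PS_derive h) t) rw (rw / 2 * PSeries (PS_derive h) (rw / 2))); auto.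
      + apply Rmult_lt_0_compat; lra.
      + eapply NL_mono; [|apply (NL_and _ _ _ (NL_gt rw (rw/2) ltac:(lra)) (NL_pos (Fin rw) ltac:(simpl; lra)))].
        intros t [H1 [H2 H3]]. simpl in H3. split; [apply Hlt; lra|].
        assert (Htr : Rbar_lt t (CV_radius h)) by (pose proof (Hin t ltac:(lra) ltac:(lra)) as HH; rewrite Rabs_pos_eq in HH by lra; exact HH).
        pose proof (Hd_mono h hnn (rw/2) t ltac:(lra) ltac:(lra) Htr). nra.
      + rewrite <- Hrw1. apply cont_TL; auto. }
  assert (Tp : exists m, tends_left (mu (shift_coef h)) (toER (CV_radius h)) m /\
     ER_le (Fin 1) m /\ m <> Fin 1 /\ ER_lt (Fin 0) m).
  { destruct (CV_radius h) as [R| |] eqn:ERh.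
    - simpl in HrwR. destruct (Ff_mono_TL h k0 R hnn Hk Hk1 ltac:(lra) ltac:(rewrite ERh; simpl; lra)) as [L [HL1 HL2]].
      exists L. split.
      + simpl. apply mu_TL; [simpl; lra| |exact HL1]. intros t Ht Htr. rewrite ERh. exact Htr.
      + pose proof (HL2 rw ltac:(lra) HrwR) as HL3. destruct L as [l|].
        * simpl in HL3. split; [simpl; lra|]. split; [intros E; injection E; lra| simpl; lra].
        * split; [simpl; auto|]. split; [discriminate| simpl; auto].
    - exists Inf. split; [|simpl; repeat split; auto; discriminate].
      simpl. intros M.
      assert (H1r : Rbar_lt 1 (CV_radius h)) by (rewrite ERh; simpl; auto).
      pose proof (Hd_pos h k0 hnn Hk Hk1 1 Rlt_0_1 H1r) as Hc1.
      exists (Rmax 1 (M / PSeries (PS_derive h) 1)). intros t Ht.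
      pose proof (Rmax_l 1 (M / PSeries (PS_derive h) 1)). pose proof (Rmax_r 1 (M / PSeries (PS_derive h) 1)).
      assert (Htr : Rbar_lt t (CV_radius h)) by (rewrite ERh; simpl; auto).
      rewrite mu_eq by (rewrite Rabs_pos_eq by lra; exact Htr).
      pose proof (Hf_nonneg h h0 hnn t ltac:(lra) Htr).
      pose proof (Hd_mono h hnn 1 t ltac:(lra) ltac:(lra) Htr).
      assert (HM : M < t * PSeries (PS_derive h) 1).
      { assert (H4 : M / PSeries (PS_derive h) 1 < t) by lra.
        apply (Rmult_lt_compat_r (PSeries (PS_derive h) 1)) in H4; auto.
        unfold Rdiv in H4. rewrite Rmult_assoc, Rinv_l in H4 by lra. lra. }
      nra.
    - simpl in HrwR. contradiction. }
  destruct Tp as [m [Tp [Hm1 [Hm2 Hm3]]]].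
  assert (Hrp : ER_lt (Fin 0) (toER (CV_radius h))).
  { apply toER_lt; auto. eapply Rbar_le_lt_trans; [|exact HrwR]. simpl; lra. }
  assert (Hpz : psi w z = 1).
  { apply (psi_Ff h w z h0 hnn hw); [lra| rewrite ERw; simpl; lra| exact Hz1]. }
  assert (Hmz : mu (shift_coef h) z = 1) by (rewrite mu_eq; [exact Hz1| rewrite Rabs_pos_eq by lra; exact Hzr]).
  split.
  - eapply (types_equiv w (shift_coef h) (Fin rw) _ Inf m); eauto; simpl; auto; try lra. tauto.
  - destruct (tau_sol w (Fin rw) Inf z Rw ltac:(simpl; lra) Tw ltac:(simpl; auto) ltac:(discriminate)
       ltac:(lra) ltac:(simpl; lra) Hpz) as [T1 T2].
    { intros t Ht Htr Hpt. simpl in Htr.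
      assert (Htr' : Rbar_lt t (CV_radius h)) by (pose proof (Hin t ltac:(lra) ltac:(lra)) as HH; rewrite Rabs_pos_eq in HH by lra; exact HH).
      apply (psi_Ff h w t h0 hnn hw) in Hpt; [|lra|rewrite ERw; simpl; lra].
      apply (Ff_inj h k0); auto; lra. }
    destruct (t0_sol (shift_coef h) _ m z Rp Hrp Tp Hm1 Hm2 ltac:(lra) ltac:(apply toER_lt; auto) Hmz) as [S1 S2].
    { intros t Ht Htr Hmt. apply toER_lt in Htr; auto.
      rewrite mu_eq in Hmt by (rewrite Rabs_pos_eq by lra; exact Htr).
      apply (Ff_inj h k0); auto; try lra. unfold Ff in *; lra. }
    exists (Fin z). auto.
Qed.

Lemma finish_sol h w k0 r z nu m : h 0%nat = 0 -> (forall k, 0 <= h k) -> is_inv_one_minus h w ->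
  0 < h k0 -> (1 <= k0)%nat ->
  CV_radius w = Finite r -> CV_radius h = Finite r -> 0 < r -> 0 < z < r -> Ff h z = 1 ->
  tends_left (psi w) (Fin r) nu -> tends_left (mu (shift_coef h)) (Fin r) m ->
  ER_le (Fin 1) nu -> nu <> Fin 1 -> ER_le (Fin 1) m -> m <> Fin 1 ->
  ER_lt (Fin 0) nu -> ER_lt (Fin 0) m -> Goal h w.
Proof.
  intros h0 hnn hw Hk Hk1 ERw ERh Hr Hz Hz1 Tw Tp Hn1 Hn2 Hm1 Hm2 Hn0 Hm0.
  assert (Rw : is_radius w (Fin r)) by (pose proof (radius_CV w) as HH; rewrite ERw in HH; exact HH).
  assert (Rp : is_radius (shift_coef h) (Fin r)) by (pose proof (radius_p h) as HH; rewrite ERh in HH; exact HH).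
  assert (Hzr : Rbar_lt z (CV_radius h)) by (rewrite ERh; simpl; lra).
  assert (Hpz : psi w z = 1).
  { apply (psi_Ff h w z h0 hnn hw); [lra| rewrite ERw; simpl; lra| exact Hz1]. }
  assert (Hmz : mu (shift_coef h) z = 1) by (rewrite mu_eq; [exact Hz1| rewrite Rabs_pos_eq by lra; exact Hzr]).
  split.
  - eapply (types_equiv w (shift_coef h) (Fin r) (Fin r) nu m); eauto; simpl; auto; try lra. tauto.
  - destruct (tau_sol w (Fin r) nu z Rw ltac:(simpl; lra) Tw Hn1 Hn2
       ltac:(lra) ltac:(simpl; lra) Hpz) as [T1 T2].
    { intros t Ht Htr Hpt. simpl in Htr.
      assert (Htr' : Rbar_lt t (CV_radius h)) by (rewrite ERh; simpl; lra).
      apply (psi_Ff h w t h0 hnn hw) in Hpt; [|lra|rewrite ERw; simpl; lra].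
      apply (Ff_inj h k0); auto; lra. }
    destruct (t0_sol (shift_coef h) _ m z Rp ltac:(simpl; lra) Tp Hm1 Hm2 ltac:(lra) ltac:(simpl; lra) Hmz) as [S1 S2].
    { intros t Ht Htr Hmt. simpl in Htr.
      assert (Htr' : Rbar_lt t (CV_radius h)) by (rewrite ERh; simpl; lra).
      rewrite mu_eq in Hmt by (rewrite Rabs_pos_eq by lra; exact Htr').
      apply (Ff_inj h k0); auto; try lra. unfold Ff in *; lra. }
    exists (Fin z). auto.
Qed.

Lemma finish_nosol h w r nu m : h 0%nat = 0 -> (forall k, 0 <= h k) -> is_inv_one_minus h w ->
  CV_radius w = Finite r -> CV_radius h = Finite r -> 0 < r ->
  (forall t, 0 <= t -> t < r -> Ff h t < 1) ->
  tends_left (psi w) (Fin r) nu -> tends_left (mu (shift_coef h)) (Fin r) m ->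
  ((nu = Fin 1 /\ m = Fin 1) \/
   (ER_lt (Fin 0) nu /\ ER_lt nu (Fin 1) /\ ER_lt (Fin 0) m /\ ER_lt m (Fin 1))) ->
  Goal h w.
Proof.
  intros h0 hnn hw ERw ERh Hr HF Tw Tp Hc.
  assert (Rw : is_radius w (Fin r)) by (pose proof (radius_CV w) as HH; rewrite ERw in HH; exact HH).
  assert (Rp : is_radius (shift_coef h) (Fin r)) by (pose proof (radius_p h) as HH; rewrite ERh in HH; exact HH).
  split.
  - destruct Hc as [[-> ->]|[H1 [H2 [H3 H4]]]].
    + apply (types_equiv w (shift_coef h) (Fin r) (Fin r) (Fin 1) (Fin 1)); auto; simpl; try lra.
    + apply (types_equiv w (shift_coef h) (Fin r) (Fin r) nu m); auto; simpl; try lra.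
      rewrite ER_lt_not_le in H2, H4. tauto.
  - destruct (tau_nosol w (Fin r) nu Rw ltac:(simpl; lra) Tw) as [T1 T2].
    { destruct Hc as [[-> _]|[_ [H2 _]]]; auto. }
    { intros t Ht Htr Hpt. simpl in Htr.
      apply (psi_Ff h w t h0 hnn hw) in Hpt; [|lra|rewrite ERw; simpl; lra].
      specialize (HF t ltac:(lra) Htr). lra. }
    destruct (t0_nosol (shift_coef h) (Fin r) m Rp ltac:(simpl; lra) Tp) as [S1 S2].
    { destruct Hc as [[_ ->]|[_ [_ [H3 H4]]]]; auto. }
    { intros t Ht Htr Hmt. simpl in Htr.
      assert (Htr' : Rbar_lt t (CV_radius h)) by (rewrite ERh; simpl; lra).
      rewrite mu_eq in Hmt by (rewrite Rabs_pos_eq by lra; exact Htr').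
      specialize (HF t Ht Htr). unfold Ff in HF. lra. }
    exists (Fin r). auto.
Qed.

Lemma sol_t1 h w k0 r t1 nu m : h 0%nat = 0 -> (forall k, 0 <= h k) -> is_inv_one_minus h w ->
  0 < h k0 -> (1 <= k0)%nat ->
  CV_radius w = Finite r -> CV_radius h = Finite r -> 0 < r -> 0 < t1 < r -> 1 < Ff h t1 ->
  tends_left (psi w) (Fin r) nu -> tends_left (mu (shift_coef h)) (Fin r) m ->
  ER_le (Fin 1) nu -> nu <> Fin 1 -> ER_le (Fin 1) m -> m <> Fin 1 ->
  ER_lt (Fin 0) nu -> ER_lt (Fin 0) m -> Goal h w.
Proof.
  intros h0 hnn hw Hk Hk1 ERw ERh Hr Ht1 HF1 Tw Tp Hn1 Hn2 Hm1 Hm2 Hn0 Hm0.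
  assert (HcF : forall a, 0 <= a <= t1 -> continuity_pt (Ff h) a).
  { intros a Ha. apply Ff_cont. rewrite ERh. rewrite Rabs_pos_eq by lra. simpl; lra. }
  assert (HF0 : Ff h 0 < 1) by (rewrite Ff_0 by auto; lra).
  destruct (IVT_1 (Ff h) t1 ltac:(lra) HcF HF0 HF1) as [z [Hz Hz1]].
  eapply (finish_sol h w k0 r z nu m); eauto. lra.
Qed.

Lemma caseB h w k0 r : h 0%nat = 0 -> (forall k, 0 <= h k) -> is_inv_one_minus h w ->
  0 < h k0 -> (1 <= k0)%nat ->
  CV_radius w = Finite r -> CV_radius h = Finite r -> 0 < r -> Goal h w.
Proof.
  intros h0 hnn hw Hk Hk1 ERw ERh Hr.
  assert (Hinh : forall t, 0 <= t -> t < r -> Rbar_lt t (CV_radius h)) by (intros; rewrite ERh; simpl; lra).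
  assert (Hlt : forall t, 0 <= t -> t < r -> PSeries h t < 1).
  { intros t Ht1 Ht2. apply (Hlt1 h w); auto. rewrite ERw. exact Ht2. }
  assert (Hpsi : forall t, 0 < t -> ER_lt (Fin t) (Fin r) ->
     (Ff h t - PSeries h t) / (1 - PSeries h t) = psi w t).
  { intros t Ht Htr. simpl in Htr. rewrite (psi_eq h w t h0 hnn hw).
    - unfold Ff. f_equal. ring.
    - rewrite ERw, Rabs_pos_eq by lra. simpl; lra. }
  assert (Hr2 : Rbar_lt (r/2) (CV_radius h)) by (apply Hinh; lra).
  pose proof (Hd_pos h k0 hnn Hk Hk1 (r/2) ltac:(lra) Hr2) as Hd2.
  set (c := r / 2 * PSeries (PS_derive h) (r / 2)).
  assert (Hc : 0 < c) by (unfold c; apply Rmult_lt_0_compat; lra).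
  assert (Hnear : near_left (Fin r) (fun t => 0 < t /\ t < r /\ c <= Ff h t - PSeries h t /\
                      PSeries h t < 1 /\ 0 <= PSeries h t)).
  { eapply NL_mono; [|apply (NL_and _ _ _ (NL_gt r (r/2) ltac:(lra)) (NL_pos (Fin r) ltac:(simpl; lra)))].
    intros t [H1 [H2 H3]]. simpl in H3.
    pose proof (Hd_mono h hnn (r/2) t ltac:(lra) ltac:(lra) (Hinh t ltac:(lra) H3)).
    pose proof (Hf_nonneg h h0 hnn t ltac:(lra) (Hinh t ltac:(lra) H3)).
    repeat split; try lra.
    - unfold Ff, c. nra.
    - apply Hlt; lra. }
  destruct (TL_mono (PSeries h) r Hr) as [LH [TLH HLH]].
  { intros s t Hs Hst Ht. apply PS_mono; auto. apply Hinh; lra. }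
  assert (HLH1 : ER_le LH (Fin 1)).
  { apply (TL_le (PSeries h) r LH 1 Hr TLH). eapply NL_mono; [|exact Hnear].
    intros t [_ [_ [_ [H4 _]]]]; lra. }
  destruct LH as [l|]; [|simpl in HLH1; contradiction]. simpl in HLH1.
  destruct (Ff_mono_TL h k0 r hnn Hk Hk1 Hr ltac:(rewrite ERh; simpl; lra)) as [m [TF HFm]].
  assert (Tp : tends_left (mu (shift_coef h)) (Fin r) m).
  { apply mu_TL; [simpl; lra| |exact TF]. intros t Ht Htr. simpl in Htr. apply Hinh; lra. }
  assert (HFr2 : 0 < Ff h (r/2)).
  { pose proof (Hf_nonneg h h0 hnn (r/2) ltac:(lra) Hr2). unfold Ff. nra. }
  pose proof (HFm (r/2) ltac:(lra) ltac:(lra)) as HFm2.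
  assert (Hm0 : ER_lt (Fin 0) m) by (destruct m; simpl in *; auto; lra).
  destruct m as [m0|].
  - destruct (Rlt_or_le l 1) as [Hl1|Hl1].
    +
      pose proof (TL_lim _ _ _ Hr TF) as LF. pose proof (TL_lim _ _ _ Hr TLH) as LHh.
      pose proof (limit_minus _ _ _ _ _ _ LF LHh) as LFH.
      pose proof (limit_inv _ _ _ _ (limit_minus _ _ _ _ _ _ (lim_const 1 (Dl r) r) LHh)
                    ltac:(lra)) as LI.
      pose proof (limit_mul _ _ _ _ _ _ LFH LI) as Lg.
      set (nu := (m0 - l) * / (1 - l)) in *.
      assert (Tw : tends_left (psi w) (Fin r) (Fin nu)).
      { apply (TL_ext (fun t => (Ff h t - PSeries h t) / (1 - PSeries h t))); [|simpl; lra|].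
        - exact Hpsi.
        - apply lim_TL; auto. }
      assert (Hml : c <= m0 - l).
      { apply (TL_ge (fun t => Ff h t - PSeries h t) r (m0 - l) c Hr).
        - apply lim_TL; auto.
        - eapply NL_mono; [|exact Hnear]. intros t [_ [_ [H3 _]]]; lra. }
      assert (Hnu0 : 0 < nu) by (unfold nu; apply Rmult_lt_0_compat; [lra| apply Rinv_0_lt_compat; lra]).
      assert (Hnu : nu * (1 - l) = m0 - l) by (unfold nu; field; lra).
      assert (HFlt : m0 <= 1 -> forall t, 0 <= t -> t < r -> Ff h t < 1).
      { intros Hm01 t Ht1 Ht2.
        pose proof (Ff_strict h k0 hnn Hk Hk1 t ((t + r)/2) Ht1 ltac:(lra) (Hinh ((t+r)/2) ltac:(lra) ltac:(lra))).
        pose proof (HFm ((t + r)/2) ltac:(lra) ltac:(lra)). simpl in H0. lra. }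
      destruct (Rtotal_order m0 1) as [Hm|[Hm|Hm]].
      * apply (finish_nosol h w r (Fin nu) (Fin m0)); auto; [apply HFlt; lra|].
        right. simpl in *. repeat split; try lra. nra.
      * apply (finish_nosol h w r (Fin nu) (Fin m0)); auto; [apply HFlt; lra|].
        left. split; f_equal; auto. subst m0. nra.
      * destruct (NL_ex (Fin r) _ ltac:(simpl; lra) (NL_and _ _ _ Hnear (TF (m0 - 1) ltac:(lra))))
          as [t1 [[Ht1 [Ht2 _]] Ht3]].
        pose proof (Rle_abs (m0 - Ff h t1)). rewrite Rabs_minus_sym in Ht3.
        apply (sol_t1 h w k0 r t1 (Fin nu) (Fin m0)); auto; try lra; simpl; try lra.
        -- nra.
        -- intros E; injection E; intros; nra.
        -- intros E; injection E; intros; lra.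
    +
      assert (El : l = 1) by lra. subst l.
      assert (Tw : tends_left (psi w) (Fin r) Inf).
      { apply (TL_ext (fun t => (Ff h t - PSeries h t) / (1 - PSeries h t))); [exact Hpsi|simpl; lra|].
        apply (psi_inf (PSeries h) (fun t => Ff h t - PSeries h t) r c); auto.
        eapply NL_mono; [|exact Hnear]. intros t [_ [_ [H3 [H4 _]]]]; split; lra. }
      destruct (NL_ex (Fin r) _ ltac:(simpl; lra) (NL_and _ _ _ Hnear (TLH (c/2) ltac:(lra))))
          as [t1 [[Ht1 [Ht2 [Ht3 _]]] Ht4]].
      pose proof (Rle_abs (1 - PSeries h t1)). rewrite Rabs_minus_sym in Ht4.
      pose proof (HFm t1 ltac:(lra) Ht2). simpl in H0.
      apply (sol_t1 h w k0 r t1 Inf (Fin m0)); auto; try lra; simpl; try lra; try discriminate.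
      intros E; injection E; intros; lra.
  -
    assert (Tw : tends_left (psi w) (Fin r) Inf).
    { apply (TL_ext (fun t => (Ff h t - PSeries h t) / (1 - PSeries h t))); [exact Hpsi|simpl; lra|].
      intros M. eapply NL_mono; [|exact (NL_and _ _ _ Hnear (TF (M + 1)))].
      intros t [[H1 [H2 [H3 [H4 H5]]]] H6].
      pose proof (ge_div (Ff h t - PSeries h t) (1 - PSeries h t) ltac:(lra) ltac:(lra)). lra. }
    destruct (NL_ex (Fin r) _ ltac:(simpl; lra) (NL_and _ _ _ Hnear (TF 2)))
        as [t1 [[Ht1 [Ht2 _]] Ht3]].
    apply (sol_t1 h w k0 r t1 Inf Inf); auto; try lra; simpl; auto; discriminate.
Qed.

Lemma Rw_pos h w : h 0%nat = 0 -> (forall k, 0 <= h k) -> is_inv_one_minus h w ->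
  Rbar_lt 0 (CV_radius h) -> exists t, 0 < t /\ Rbar_le t (CV_radius w).
Proof.
  intros h0 hnn hw Hh.
  assert (Hc : continuity_pt (PSeries h) 0) by (apply PSeries_continuity; now rewrite Rabs_R0).
  destruct (Hc (1/2)) as [alp [Halp Hd]]; [lra|].
  destruct (exists_between 0 (CV_radius h) alp Hh Halp) as [t [[Ht1 Ht2] Ht3]].
  exists t. split; auto. apply (CVw_ge h w t h0 hnn hw); auto; try lra.
  assert (HH : dist R_met (PSeries h t) (PSeries h 0) < 1/2).
  { apply Hd. split.
    - unfold D_x, no_cond. split; auto. lra.
    - simpl. unfold Rdist. rewrite Rabs_pos_eq; lra. }
  simpl in HH. unfold Rdist in HH. rewrite Hf_0 in HH by auto.
  pose proof (Rle_abs (PSeries h t - 0)). lra.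
Qed.

Lemma Rw_fin h w k0 : h 0%nat = 0 -> (forall k, 0 <= h k) -> is_inv_one_minus h w ->
  0 < h k0 -> (1 <= k0)%nat -> CV_radius h = p_infty ->
  exists T, Rbar_le (CV_radius w) (Finite T).
Proof.
  intros h0 hnn hw Hk Hk1 ERh.
  set (T := Rmax 1 (/ h k0)).
  exists T. destruct (Rbar_le_lt_dec (CV_radius w) T) as [|Hlt]; auto. exfalso.
  assert (HT1 : 1 <= T) by apply Rmax_l.
  assert (HT2 : / h k0 <= T) by apply Rmax_r.
  pose proof (Hlt1 h w T h0 hnn hw ltac:(lra) Hlt) as H1.
  pose proof (PS_ge_term h T k0 hnn ltac:(lra) ltac:(rewrite ERh; simpl; auto)) as H2.
  assert (T <= T ^ k0).
  { destruct k0; [lia|]. simpl. rewrite <- (Rmult_1_r T) at 1. apply Rmult_le_compat_l; [lra|].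
    apply pow_R1_Rle. lra. }
  assert (1 <= h k0 * T).
  { apply (Rmult_le_compat_l (h k0)) in HT2; [|lra]. rewrite Rinv_r in HT2 by lra. lra. }
  nra.
Qed.

Theorem mainTheorem7 (h w : nat -> R)
  (h0 : h 0%nat = 0)
  (hnn : forall k, 0 <= h k)
  (hnz : exists k, h k <> 0)
  (hw : is_inv_one_minus h w) :
  (forall T : seqtype, weight_type w T <-> offspring_type (shift_coef h) T) /\
  (exists x : ER, tau_spec w x /\ t0_spec (shift_coef h) x /\
     (forall y, tau_spec w y -> y = x) /\
     (forall y, t0_spec (shift_coef h) y -> y = x)).
Proof.
  destruct hnz as [k0 Hk0].
  assert (Hk : 0 < h k0) by (pose proof (hnn k0); lra).
  assert (Hk1 : (1 <= k0)%nat) by (destruct k0; [contradiction|lia]).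
  change (Goal h w).
  pose proof (CV_radius_ge_0 h) as Rh0. pose proof (CV_radius_ge_0 w) as Rw0.
  pose proof (CVw_le_CVh h w h0 hnn hw) as Hwh.
  destruct (Rbar_le_lt_dec (CV_radius h) 0) as [Hz|Hp].
  - assert (E1 : CV_radius h = Finite 0) by (apply Rbar_le_antisym; auto).
    assert (E2 : CV_radius w = Finite 0).
    { apply Rbar_le_antisym; auto. rewrite <- E1; auto. }
    assert (Rw : is_radius w (Fin 0)) by (pose proof (radius_CV w) as HH; rewrite E2 in HH; exact HH).
    assert (Rp : is_radius (shift_coef h) (Fin 0)) by (pose proof (radius_p h) as HH; rewrite E1 in HH; exact HH).
    split; [now apply types_zero|].
    destruct (tau_zero w Rw), (t0_zero (shift_coef h) Rp). exists (Fin 0). auto.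
  - destruct (Rw_pos h w h0 hnn hw Hp) as [t [Ht Htw]].
    assert (Hfin : exists rw, CV_radius w = Finite rw).
    { destruct (CV_radius w) as [rw| |] eqn:E; [eauto| |simpl in Rw0; contradiction].
      destruct (CV_radius h) as [R| |] eqn:E'.
      - simpl in Hwh; contradiction.
      - destruct (Rw_fin h w k0 h0 hnn hw Hk Hk1 E') as [T HT]. rewrite E in HT. simpl in HT; contradiction.
      - simpl in Hwh; contradiction. }
    destruct Hfin as [rw ERw].
    rewrite ERw in Htw. simpl in Htw.
    destruct (Rbar_lt_dec rw (CV_radius h)) as [HA|HB].
    + apply (caseA h w k0 rw); auto; lra.
    + apply (caseB h w k0 rw); auto; try lra.
      rewrite ERw in Hwh. destruct (CV_radius h) as [R| |]; simpl in *; try contradiction.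
      f_equal. lra.
Qed.
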